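(* Let $m\ge2$ and $t\ge1$, and let $H=K_{1,m}$ with center $v$ and leaves $v_1,\dots,v_m$. Let $T_H=\{v_1,\dots,v_{m-1}\}$ and $(T_H)_t=\{u_i^s: 1\le i\le m-1,\ 0\le s\le t\}$. Then $(T_H)_t$ is both a minimum twin cover and a minimum size determining set of $\mu_t(H)$; in particular $\det(\mu_t(K_{1,m}))=(t+1)(m-1)$.
   Context: All graphs are finite and simple. For a graph $G$ with $V(G)=\{v_1,\dots,v_n\}$ and an integer $t\ge1$, the generalized Mycielskian $\mu_t(G)$ has vertex set $\{u_i^s: 1\le i\le n,\ 0\le s\le t\}\cup\{w\}$, where $u_i^0$ is identified with $v_i$. Its edges are: $u_i^0u_j^0$ for each edge $v_iv_j$ of $G$; $u_i^su_j^{s+1}$ and $u_j^su_i^{s+1}$ for each edge $v_iv_j$ of $G$ and each $0\le s<t$; and $u_i^tw$ for all $1\le i\le n$. A set $S\subseteq V(G)$ is a determining set for $G$ if the only automorphism of $G$ fixing every vertex of $S$ is the identity; $\det(G)$ is the minimum size of a determining set. Two vertices are twins if they have the same open neighborhood. A minimum twin cover of a graph is a subset of its vertices of minimum size that contains at least one vertex from every pair of distinct twin vertices. *)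

(* Defs.v *)
From mathcomp Require Import all_boot all_fingroup.
Set Implicit Arguments. Unset Strict Implicit. Unset Printing Implicit Defensive.

(* A simple graph: a symmetric irreflexive relation e on a finite type V. *)

Section Graphs.
Variables (V : finType) (e : rel V).

Definition is_automorphism (f : {perm V}) : bool :=
  [forall x, forall y, e (f x) (f y) == e x y].

Definition determining (S : {set V}) : bool :=
  [forall f : {perm V}, (is_automorphism f && [forall x in S, f x == x]) ==> (f == 1%g)].

(* det(G): minimum size of a determining set (V itself is always one) *)
Definition det_number : nat :=
  \big[minn/#|V|]_(S : {set V} | determining S) #|S|.

Definition min_determining_set (S : {set V}) : Prop :=
  determining S /\ forall S' : {set V}, determining S' -> #|S| <= #|S'|.

Definition nbhd (x : V) : {set V} := [set y | e x y].
Definition twins (x y : V) : bool := (x != y) && (nbhd x == nbhd y).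

Definition twin_cover (S : {set V}) : bool :=
  [forall x, forall y, twins x y ==> (x \in S) || (y \in S)].

Definition min_twin_cover (S : {set V}) : Prop :=
  twin_cover S /\ forall S' : {set V}, twin_cover S' -> #|S| <= #|S'|.

End Graphs.

(* Generalized Mycielskian mu_t(G): vertex Some (x, s) is u_x^s (s = 0..t),
   None is the extra vertex w. *)
Definition myc_rel (V : finType) (e : rel V) (t : nat) : rel (option (V * 'I_t.+1)) :=
  fun a b =>
    match a, b with
    | Some (x, s), Some (y, r) =>
        e x y && [|| (val s == 0) && (val r == 0), val r == (val s).+1 | val s == (val r).+1]
    | Some (_, s), None => val s == t
    | None, Some (_, r) => val r == t
    | None, None => false
    end.

(* The star K_{1,m} on 'I_m.+1: center 0, leaves 1..m. *)
Definition star_rel (m : nat) : rel 'I_m.+1 :=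
  fun i j => (val i == 0) != (val j == 0).

Definition TH_t (m t : nat) : {set option ('I_m.+1 * 'I_t.+1)} :=
  [set a | if a is Some (i, _) then (1 <= val i) && (val i <= m - 1) else false].

(* Main.v *)
Require Import Defs.
From mathcomp Require Import all_boot all_fingroup zify.
Set Implicit Arguments. Unset Strict Implicit. Unset Printing Implicit Defensive.

Definition Pn (c r : nat) := [|| (r==0)&&(c==0), c == r.+1 | r == c.+1].

Lemma N1 c c' t : 1 <= t -> c <= t -> c' <= t -> c < c' ->
  (forall r, r <= t -> Pn c r = Pn c' r) -> False.
Proof.
move=> ht hc hc' hlt H.
case: c hc hlt H => [|c] hc hlt H.
  case: c' hc' hlt H => [|[|c']] hc' hlt H //.
    by have := H 1 ht; rewrite /Pn.
  by have := H 0 isT; rewrite /Pn.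
have := H c (ltnW hc). rewrite /Pn. lia.
Qed.

Lemma N1' c c' t : 1 <= t -> c <= t -> c' <= t ->
  (forall r, r <= t -> Pn c r = Pn c' r) -> c = c'.
Proof.
move=> ht hc hc' H; case: (ltngtP c c') => // h; exfalso.
  exact: (N1 ht hc hc' h H).
apply: (N1 ht hc' hc h) => r hr; by rewrite H.
Qed.

Lemma N2 c t : 1 <= t -> c <= t -> (forall r, r <= t -> (r == t) = Pn c r) -> False.
Proof.
move=> ht hc H.
have := H t (leqnn t); rewrite /Pn eqxx => h.
case: c hc H h => [|c] hc H h.
  by have := H 0 isT; rewrite /Pn; lia.
by have := H c (ltnW hc); rewrite /Pn; lia.
Qed.

Lemma bigmin_le (I : finType) (P : pred I) (F : I -> nat) x0 i :
  P i -> \big[minn/x0]_(j | P j) F j <= F i.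
Proof.
move=> Pi; have : i \in index_enum I by rewrite mem_index_enum.
elim: (index_enum I) => [|a l IH] //; rewrite inE big_cons => /orP [/eqP <-|/IH h].
  by rewrite Pi geq_minl.
case: (P a) => //; by rewrite geq_min h orbT.
Qed.

Section S.
Variables (m t : nat) (hm : 2 <= m) (ht : 1 <= t).
Local Notation V := (option ('I_m.+1 * 'I_t.+1)).
Local Notation E := (@myc_rel _ (@star_rel m) t).

Definition leaf (z : V) : bool := if z is Some (i, _) then nat_of_ord i != 0 else false.
Definition L1 (r : nat) : V := Some (inord 1, inord r).
Definition Cc (c : nat) : V := Some (ord0, inord c).

Lemma E_L1 r z : r <= t -> E (L1 r) z =
  match z with None => r == t | Some (j, c) => (nat_of_ord j == 0) && Pn c r end.
Proof.
move=> hr; case: z => [[j c]|] /=; rewrite /L1 /myc_rel /star_rel /=.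
  have h1 : val (inord 1 : 'I_m.+1) = 1 by rewrite /= inordK //; lia.
  rewrite h1 inordK //; case: (val j == 0) => //.
by rewrite inordK.
Qed.

Lemma E_C c z : c <= t -> E (Cc c) z =
  match z with None => c == t | Some (j, r) => (nat_of_ord j != 0) && Pn r c end.
Proof.
move=> hc; case: z => [[j r]|] /=; rewrite /Cc /myc_rel /star_rel /= inordK //.
Qed.

Lemma E_sym a b : E a b = E b a.
Proof.
case: a => [[i s]|]; case: b => [[j r]|] //=.
rewrite /star_rel eq_sym; congr (_ && _).
by case: (val s == 0); case: (val r == 0); case: (val r == (val s).+1);
  case: (val s == (val r).+1); rewrite //= ?orbT ?orbF.
Qed.

Lemma E_irr a : E a a = false.
Proof. by case: a => [[i s]|] //=; rewrite /star_rel eqxx. Qed.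

Lemma lemA (y z : V) : ~~ leaf y ->
  (forall r, r <= t -> E (L1 r) y = E (L1 r) z) -> z = y.
Proof.
move=> hy H.
have H' : forall r, r <= t -> match y with None => r == t | Some (j, c) => (nat_of_ord j == 0) && Pn c r end
   = match z with None => r == t | Some (j, c) => (nat_of_ord j == 0) && Pn c r end.
  by move=> r hr; rewrite -!E_L1 // H.
clear H.
case: y hy H' => [[i s]|] /= hy H'.
- move: hy; rewrite negbK => /eqP hi0.
  case: z H' => [[j c]|] H'.
  + have [r hr hPr] : exists2 r, r <= t & Pn s r.
      case: (ltnP s t) => hst.
        by exists s.+1 => //; rewrite /Pn eqxx !orbT.
      have hs := ltn_ord s.
      exists s.-1; first lia.
      rewrite /Pn; apply/orP; right; apply/orP; left; apply/eqP. have := ltn_ord s. lia.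
    have := H' r hr; rewrite hi0 eqxx hPr /= => /esym/andP [/eqP hj _].
    have hcs : val c = val s.
      apply: (N1' ht (_ : val c <= t) (_ : val s <= t)); try by rewrite -ltnS ltn_ord.
      by move=> r' hr'; have := H' r' hr'; rewrite hi0 hj eqxx.
    congr Some; congr pair; apply: val_inj; by rewrite /= ?hj ?hi0.
  + exfalso; apply: (N2 ht (_ : val s <= t)); first by rewrite -ltnS ltn_ord.
    by move=> r hr; have := H' r hr; rewrite hi0 eqxx.
- case: z H' => [[j c]|] H' //.
  exfalso.
  case hj: (val j == 0).
    apply: (N2 ht (_ : val c <= t)); first by rewrite -ltnS ltn_ord.
    by move=> r hr; have := H' r hr; rewrite hj.
  by have := H' t (leqnn t); rewrite hj eqxx.
Qed.


Lemma E_nbhd (x y : V) : nbhd E x = nbhd E y -> forall z, E x z = E y z.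
Proof. by move=> /setP h z; have := h z; rewrite !inE. Qed.

Lemma inTH (i : 'I_m.+1) (s : 'I_t.+1) : (Some (i, s) \in TH_t m t) = (1 <= i) && (i <= m - 1).
Proof. by rewrite inE. Qed.

Lemma leaf_level (i j : 'I_m.+1) (s s' : 'I_t.+1) : i != 0 :> nat -> j != 0 :> nat ->
  (forall c, c <= t -> E (Cc c) (Some (i, s)) = E (Cc c) (Some (j, s'))) -> s = s'.
Proof.
move=> hi hj H; apply: val_inj => /=.
apply: (N1' ht (_ : s <= t) (_ : s' <= t)); try by rewrite -ltnS ltn_ord.
by move=> r hr; have := H r hr; rewrite !E_C //= hi hj.
Qed.

Lemma twins_leaves (i j : 'I_m.+1) (s : 'I_t.+1) : i != 0 :> nat -> j != 0 :> nat -> i != j ->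
  twins E (Some (i, s)) (Some (j, s)).
Proof.
move=> hi hj hij; rewrite /twins.
apply/andP; split; first by apply/eqP => -[/eqP]; rewrite (negbTE hij).
apply/eqP/setP => z; rewrite !inE; case: z => [[k r]|] //=.
by rewrite /star_rel (negbTE hi) (negbTE hj).
Qed.

Lemma TH_twin_cover : twin_cover E (TH_t m t).
Proof.
apply/forallP => x; apply/forallP => y; apply/implyP => /andP [nxy /eqP hN].
have hE := E_nbhd hN.
apply/negPn/negP => /norP [hx hy].
have hE' : forall r, r <= t -> E (L1 r) x = E (L1 r) y.
  by move=> r _; rewrite E_sym hE E_sym.
case lx: (leaf x).
  case ly: (leaf y); last first.
    have := lemA (negbT ly) (fun r hr => esym (hE' r hr)).
    by move=> exy; rewrite exy eqxx in nxy.
  case: x y nxy hN hE hx hy hE' lx ly => [[i s]|] [[j s']|] // nxy hN hE hx hy hE' lx ly.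
  have hs : s = s'.
    apply: (leaf_level lx ly) => c hc; by rewrite E_sym hE E_sym.
  subst s'.
  have hi : nat_of_ord i = m.
    move: hx; rewrite inTH; have := ltn_ord i; move: lx; rewrite /leaf; move: (nat_of_ord i) => k; lia.
  have hj : nat_of_ord j = m.
    move: hy; rewrite inTH; have := ltn_ord j; move: ly; rewrite /leaf; move: (nat_of_ord j) => k; lia.
  have ij : i = j by apply: val_inj; rewrite /= hi hj.
  by rewrite ij eqxx in nxy.
have := lemA (negbT lx) hE'.
by move=> exy; rewrite exy eqxx in nxy.
Qed.

Lemma L1_TH r : r <= t -> L1 r \in TH_t m t.
Proof. move=> hr; rewrite /L1 inTH inordK //; lia. Qed.

Lemma TH_determining : determining E (TH_t m t).
Proof.
apply/forallP => f; apply/implyP => /andP [/forallP haut /forall_inP hfix].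
have hA : forall x y, E (f x) (f y) = E x y by move=> x y; exact/eqP/(forallP (haut x) y).
have hF : forall x, x \in TH_t m t -> f x = x by move=> x /hfix /eqP.
have hNL : forall y, ~~ leaf y -> f y = y.
  move=> y ly; apply: lemA => // r hr.
  by rewrite -{2}(hF _ (L1_TH hr)) hA.
apply/eqP/permP => y; rewrite perm1.
case ly: (leaf y); last by apply: hNL; rewrite ly.
case hy: (y \in TH_t m t); first by apply: hF.
have lz : leaf (f y).
  apply/negPn/negP => lz.
  have e : f y = y by apply: (@perm_inj _ f); exact: hNL.
  by rewrite e ly in lz.
case: y ly hy hNL hF hA lz => [[i s]|] // ly hy hNL hF hA lz.
move: lz; case ez: (f (Some (i, s))) => [[j s']|] // lz.
have hs : s = s'.
  apply: (leaf_level ly lz).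
  move=> c hc.
  by rewrite -ez -{2}(hNL (Cc c)) ?hA.
subst s'.
have hi : nat_of_ord i = m.
  move: hy; rewrite inTH; have := ltn_ord i; move: ly; rewrite /leaf; move: (nat_of_ord i) => k; lia.
case hj: (Some (j, s) \in TH_t m t).
  have e : Some (i, s) = Some (j, s) by apply: (@perm_inj _ f); rewrite ez hF.
  by rewrite e hj in hy.
have hj' : nat_of_ord j = m.
  move: hj; rewrite inTH; have := ltn_ord j; move: lz; rewrite /leaf; move: (nat_of_ord j) => k; lia.
have ij : i = j by apply: val_inj; rewrite /= hi hj'.
by rewrite ij.
Qed.

Lemma TH_min_twin (S' : {set V}) : twin_cover E S' -> #|TH_t m t| <= #|S'|.
Proof.
move=> hS.
have hT : forall x y, twins E x y -> (x \in S') || (y \in S').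
  by move=> x y; move/forallP: hS => /(_ x)/forallP/(_ y)/implyP.
pose g (a : V) : V := if a \in S' then a else
   (if a is Some (i, s) then Some (ord_max, s) else a).
have hsub : g @: TH_t m t \subset S'.
  apply/subsetP => b /imsetP [a ha ->]; rewrite /g.
  case haS: (a \in S') => //.
  case: a ha haS => [[i s]|] ha haS; last by rewrite inE in ha.
  have h1 : nat_of_ord i != 0 by move: ha; rewrite inTH; move: (nat_of_ord i) => k; lia.
  have h2 : nat_of_ord (ord_max : 'I_m.+1) != 0 by rewrite /=; lia.
  have h3 : i != ord_max by apply/eqP => e; move: ha; rewrite e inTH /=; lia.
  by have := hT _ _ (twins_leaves s h1 h2 h3); rewrite haS.
have hinj : {in TH_t m t &, injective g}.
  move=> a b ha hb; rewrite /g.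
  case haS: (a \in S'); case hbS: (b \in S') => //.
  - case: b hb hbS => [[j s]|] // hb hbS e; subst a.
    by move: ha; rewrite inTH /=; lia.
  - case: a ha haS => [[i s]|] // ha haS e; subst b.
    by move: hb; rewrite inTH /=; lia.
  - case: a ha haS => [[i s]|] //; case: b hb hbS => [[j s']|] // hb hbS ha haS [e]; subst s'.
    case: (eqVneq i j) => [-> //|nij].
    have h1 : nat_of_ord i != 0 by move: ha; rewrite inTH; move: (nat_of_ord i) => k; lia.
    have h2 : nat_of_ord j != 0 by move: hb; rewrite inTH; move: (nat_of_ord j) => k; lia.
    by have := hT _ _ (twins_leaves s h1 h2 nij); rewrite haS hbS.
rewrite -(card_in_imset hinj); exact: subset_leq_card.
Qed.

Lemma det_twin (S' : {set V}) : determining E S' -> twin_cover E S'.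
Proof.
move=> hD; apply/forallP => x; apply/forallP => y; apply/implyP => tw.
apply/negPn/negP => /norP [hx hy].
move: tw => /andP [nxy /eqP hN].
have hE := E_nbhd hN.
have hE' : forall z, E z x = E z y by move=> z; rewrite E_sym hE E_sym.
have hxy : E x y = false by rewrite hE E_irr.
have aut : is_automorphism E (tperm x y).
  apply/forallP => a; apply/forallP => b; apply/eqP.
  case: tpermP => [->|->|na1 na2]; case: tpermP => [->|->|nb1 nb2].
  - by rewrite !E_irr.
  - by rewrite E_sym.
  - by rewrite hE.
  - by rewrite E_sym.
  - by rewrite !E_irr.
  - by rewrite hE.
  - by rewrite hE'.
  - by rewrite hE'.
  - by [].
have fix1 : [forall z in S', tperm x y z == z].
  apply/forall_inP => z hz; rewrite tpermD //.
    by apply: contraNneq hx => ->.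
  by apply: contraNneq hy => ->.
move/forallP: hD => /(_ (tperm x y)); rewrite aut fix1 /= => /eqP e.
have := tpermL x y; rewrite e perm1 => exy.
by rewrite exy eqxx in nxy.
Qed.

Lemma card_TH : #|TH_t m t| = (t.+1 * (m - 1))%N.
Proof.
pose A : {set 'I_m.+1} := ~: [set ord0; ord_max].
have hA : #|A| = (m - 1)%N.
  rewrite cardsCs setCK cards2 card_ord.
  have -> : (ord0 != ord_max :> 'I_m.+1) by apply/eqP => /(congr1 val) /=; lia.
  lia.
have -> : TH_t m t = [set Some p | p in setX A [set: 'I_t.+1]].
  apply/setP => -[[i s]|].
    rewrite mem_imset; last exact: Some_inj.
    rewrite !inE /=.
    have e1 : (i == ord0) = (nat_of_ord i == 0) by [].
    have e2 : (i == ord_max) = (nat_of_ord i == m) by [].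
    rewrite e1 e2 andbT; have := ltn_ord i; move: (nat_of_ord i) => k; lia.
  rewrite inE; apply/esym/imsetP => -[p _ //].
rewrite card_imset; last exact: Some_inj.
by rewrite cardsX hA cardsT card_ord mulnC.
Qed.
Lemma det_TH : det_number E = #|TH_t m t|.
Proof.
apply/eqP; rewrite eqn_leq; apply/andP; split.
  rewrite /det_number; apply: bigmin_le; exact: TH_determining.
rewrite /det_number; apply: (big_ind (fun n => #|TH_t m t| <= n)).
- exact: max_card.
- by move=> a b ha hb; rewrite leq_min ha hb.
- by move=> S' hS'; apply: TH_min_twin; apply: det_twin.
Qed.

End S.

Theorem mainTheorem11 (m t : nat) (hm : 2 <= m) (ht : 1 <= t) :
  min_twin_cover (@myc_rel _ (@star_rel m) t) (TH_t m t) /\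
  min_determining_set (@myc_rel _ (@star_rel m) t) (TH_t m t) /\
  det_number (@myc_rel _ (@star_rel m) t) = (t.+1 * (m - 1))%N.
Proof.
split; first by split; [exact: TH_twin_cover | exact: TH_min_twin].
split; first split.
- exact: TH_determining.
- by move=> S' hS'; apply: TH_min_twin => //; apply: det_twin.
by rewrite det_TH // card_TH.
Qed.
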